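(* Every locally strongly bounded CB-generated Polish group is SB-generated.
   Context: A topological group is Polish if it is separable and completely metrizable. A subset of a topological group $G$ is coarsely bounded if it has finite diameter in every continuous left-invariant metric on $G$; $G$ is CB-generated if generated by a coarsely bounded subset. A subset of $G$ is strongly bounded if it has finite diameter in every left-invariant metric on $G$; $G$ is SB-generated if generated by a strongly bounded subset, and locally strongly bounded if some open neighborhood of the identity is strongly bounded. *)

(* Defs.v *)
From HB Require Import structures.
From mathcomp Require Import all_boot.
From mathcomp Require Import all_classical all_reals topology.
From mathcomp Require Import Rstruct Rstruct_topology.
From Stdlib Require Import Reals.

Set Implicit Arguments.
Unset Strict Implicit.
Unset Printing Implicit Defensive.

Local Open Scope classical_set_scope.
Local Open Scope group_scope.

HB.mixin Record isTopologicalGroup G of Group G & Topological G := {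
  mulg_continuous : continuous (fun p : G * G => p.1 * p.2);
  invg_continuous : continuous (fun x : G => x^-1)
}.

#[short(type="topologicalGroupType")]
HB.structure Definition TopologicalGroup :=
  {G of isTopologicalGroup G & Group G & Topological G}.

Section Defs.
Variable G : topologicalGroupType.

Definition is_metric (d : G -> G -> R) : Prop :=
  (forall x y, (0 <= d x y)%R) /\
  (forall x y, d x y = 0%R <-> x = y) /\
  (forall x y, d x y = d y x) /\
  (forall x y z, (d x z <= d x y + d y z)%R).

Definition left_invariant (d : G -> G -> R) : Prop :=
  forall g x y, d (g * x) (g * y) = d x y.

Definition finite_diameter (d : G -> G -> R) (A : set G) : Prop :=
  exists M : R, forall x y, A x -> A y -> (d x y <= M)%R.

Definition continuous_metric (d : G -> G -> R) : Prop :=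
  continuous (fun p : G * G => d p.1 p.2).

Definition coarsely_bounded (A : set G) : Prop :=
  forall d, is_metric d -> left_invariant d -> continuous_metric d ->
    finite_diameter d A.

Definition strongly_bounded (A : set G) : Prop :=
  forall d, is_metric d -> left_invariant d -> finite_diameter d A.

Definition is_subgroup (H : set G) : Prop :=
  H 1 /\ (forall x y, H x -> H y -> H (x * y)) /\ (forall x, H x -> H x^-1).

Definition generated (A : set G) : set G :=
  [set x | forall H, is_subgroup H -> A `<=` H -> H x].

Definition generates (A : set G) : Prop := generated A = setT.

Definition CB_generated : Prop :=
  exists A : set G, coarsely_bounded A /\ generates A.

Definition SB_generated : Prop :=
  exists A : set G, strongly_bounded A /\ generates A.

Definition locally_strongly_bounded : Prop :=
  exists U : set G, open U /\ U 1 /\ strongly_bounded U.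

Definition separable : Prop :=
  exists D : set G, countable D /\ dense D.

Definition metric_compatible (d : G -> G -> R) : Prop :=
  forall U : set G, open U <->
    (forall x, U x -> exists eps : R, (0 < eps)%R /\
       forall y, (d x y < eps)%R -> U y).

Definition metric_complete (d : G -> G -> R) : Prop :=
  forall u : nat -> G,
    (forall eps : R, (0 < eps)%R -> exists N, forall m n,
       (N <= m)%N -> (N <= n)%N -> (d (u m) (u n) < eps)%R) ->
    exists x, forall eps : R, (0 < eps)%R -> exists N, forall n,
       (N <= n)%N -> (d (u n) x < eps)%R.

Definition completely_metrizable : Prop :=
  exists d, is_metric d /\ metric_compatible d /\ metric_complete d.

Definition polish : Prop := separable /\ completely_metrizable.

End Defs.

(* Main.v *)
Require Import Defs.
From HB Require Import structures.
From mathcomp Require Import all_boot.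
From mathcomp Require Import all_classical all_reals topology.
From mathcomp Require Import Rstruct Rstruct_topology.
From Stdlib Require Import Reals Lra Classical.

Set Implicit Arguments.
Unset Strict Implicit.
Unset Printing Implicit Defensive.

Module M1.

Local Open Scope classical_set_scope.
Local Open Scope R_scope.
Local Open Scope group_scope.

Lemma ballR (x e y : R) : ball x e y <-> Rabs (x - y) < e.
Proof. rewrite /ball /= RabsE RminusE; split => /RltP //. Qed.

Section WL.
Variable G : topologicalGroupType.
Variable W : G -> R -> Prop.
Hypothesis Wpos : forall g w, W g w -> 0 <= w.
Hypothesis Winv : forall g w, W g w -> W g^-1 w.

Fixpoint lprod (l : seq (G * R)) : G :=
  match l with [::] => 1 | a :: l' => a.1 * lprod l' end.
Fixpoint lsum (l : seq (G * R)) : R :=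
  match l with [::] => 0 | a :: l' => a.2 + lsum l' end.
Fixpoint lok (l : seq (G * R)) : Prop :=
  match l with [::] => True | a :: l' => W a.1 a.2 /\ lok l' end.

Definition reps (x : G) : set R :=
  [set s | exists l, lok l /\ lprod l = x /\ lsum l = s].
Definition len (x : G) : R := inf (reps x).

Lemma lsum_ge0 l : lok l -> 0 <= lsum l.
Proof. elim: l => [|a l IH] /=; first lra. move=> [/Wpos h /IH]; lra. Qed.

Lemma lprod_cat l1 l2 : lprod (l1 ++ l2) = lprod l1 * lprod l2.
Proof. elim: l1 => [|a l IH] /=; first by rewrite mul1g. by rewrite IH mulgA. Qed.
Lemma lsum_cat l1 l2 : lsum (l1 ++ l2) = lsum l1 + lsum l2.
Proof. elim: l1 => [|a l IH] /=; first lra. rewrite IH; lra. Qed.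
Lemma lok_cat l1 l2 : lok l1 -> lok l2 -> lok (l1 ++ l2).
Proof. elim: l1 => [|a l IH] //= [h1 h2] h3; split; auto. Qed.

Definition linv (l : seq (G * R)) := rev (map (fun a => (a.1^-1, a.2)) l).
Lemma linv_ok l : lok l -> lok (linv l).
Proof.
elim: l => [|a l IH] //= [h1 h2]. rewrite /linv /= rev_cons -cats1.
apply: lok_cat; first exact: IH. by split => //; apply: Winv.
Qed.
Lemma linv_prod l : lprod (linv l) = (lprod l)^-1.
Proof.
elim: l => [|a l IH] /=; first by rewrite invg1.
rewrite /linv /= rev_cons -cats1 lprod_cat -/(linv l) IH /= mulg1 invgM //.
Qed.
Lemma linv_sum l : lsum (linv l) = lsum l.
Proof.
elim: l => [|a l IH] //=. rewrite /linv /= rev_cons -cats1 lsum_cat -/(linv l) IH /=. lra.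
Qed.

Hypothesis Wgen : forall x, reps x !=set0.

Lemma len_le x s : reps x s -> len x <= s.
Proof.
move=> hs; apply/RleP; apply: ge_inf => //.
exists 0%R => y [l [h1 [_ <-]]]. by apply/RleP; apply: lsum_ge0.
Qed.

Lemma len_ge x m : (forall s, reps x s -> m <= s) -> m <= len x.
Proof. move=> h; apply/RleP; apply: lb_le_inf; first exact: Wgen. by move=> y /h /RleP. Qed.

Lemma len_ex x e : 0 < e -> exists l, lok l /\ lprod l = x /\ lsum l < len x + e.
Proof.
move=> he; apply: NNPP => hn.
have : len x + e <= len x; last lra.
apply: len_ge => s [l [h1 [h2 h3]]].
apply: Rnot_lt_le => hlt; apply: hn; exists l; split => //; split => //; lra.
Qed.

Lemma len_ge0 x : 0 <= len x.
Proof. apply: len_ge => s [l [h1 [_ <-]]]; exact: lsum_ge0. Qed.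

Lemma len1 : len 1 = 0.
Proof.
apply: Rle_antisym; last exact: len_ge0.
apply: len_le; exists [::]; done.
Qed.

Lemma len_mul x y : len (x * y) <= len x + len y.
Proof.
suff h : forall s1 s2, reps x s1 -> reps y s2 -> len (x * y) <= s1 + s2.
  have h1 : forall s2, reps y s2 -> len (x * y) - s2 <= len x.
    move=> s2 hs2; apply: len_ge => s1 hs1; have := h s1 s2 hs1 hs2; lra.
  have : len (x * y) - len x <= len y.
    apply: len_ge => s2 hs2; have := h1 s2 hs2; lra.
  lra.
move=> s1 s2 [l1 [o1 [p1 <-]]] [l2 [o2 [p2 <-]]].
rewrite -lsum_cat; apply: len_le; exists (l1 ++ l2); split; first exact: lok_cat.
by rewrite lprod_cat p1 p2.
Qed.

Lemma len_inv_le x : len x^-1 <= len x.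
Proof.
apply: len_ge => s [l [o [p <-]]]; rewrite -linv_sum; apply: len_le.
exists (linv l); split; first exact: linv_ok. by rewrite linv_prod p.
Qed.

Lemma len_inv x : len x^-1 = len x.
Proof.
apply: Rle_antisym; first exact: len_inv_le.
by have := len_inv_le x^-1; rewrite invgK.
Qed.

Lemma len_letter g w : W g w -> len g <= w.
Proof. move=> h; apply: len_le; exists [:: (g, w)] => /=; rewrite mulg1; split => //; split => //; lra. Qed.

Definition ldist (x y : G) := len (x^-1 * y).

Lemma ldist_linv g x y : ldist (g * x) (g * y) = ldist x y.
Proof. by rewrite /ldist invgM -mulgA (mulgA g^-1) mulVg mul1g. Qed.
Lemma ldist_sym x y : ldist x y = ldist y x.
Proof. by rewrite /ldist -len_inv invgM invgK. Qed.
Lemma ldist_tri x y z : ldist x z <= ldist x y + ldist y z.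
Proof.
rewrite /ldist; have -> : x^-1 * z = (x^-1 * y) * (y^-1 * z).
  by rewrite mulgA -(mulgA _ y) mulgV mulg1.
exact: len_mul.
Qed.
Lemma ldist_ge0 x y : 0 <= ldist x y.
Proof. exact: len_ge0. Qed.
Lemma ldist_xx x : ldist x x = 0.
Proof. by rewrite /ldist mulVg len1. Qed.

End WL.

End M1.
Import M1.

Module M2.

Local Open Scope classical_set_scope.
Local Open Scope group_scope.
Local Open Scope R_scope.

Section Kak.
Variable G : topologicalGroupType.
Variable V : nat -> set G.
Hypothesis Vone : forall n, V n 1%g.
Hypothesis Vcube : forall n a b c, V n.+1 a -> V n.+1 b -> V n.+1 c -> V n (a * b * c)%g.

Definition pw (n : nat) : R := / 2 ^ n.
Lemma pw_pos n : 0 < pw n.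
Proof. rewrite /pw; apply: Rinv_0_lt_compat; apply: pow_lt; lra. Qed.
Lemma pwS n : pw n.+1 = pw n / 2.
Proof. rewrite /pw /= Rinv_mult; lra. Qed.
Lemma pw_lt (m n : nat) : leq m.+1 n -> pw n < pw m.
Proof.
elim: n => [//|n IH] h0.
have : leq m n by rewrite -ltnS.
rewrite leq_eqVlt => /orP [/eqP e|h].
  rewrite e pwS; have := pw_pos n; lra.
have := IH h; rewrite pwS; have := pw_pos n; lra.
Qed.
Lemma pw_le_inv (k n : nat) : pw n <= pw k -> leq k n.
Proof. move=> h; rewrite leqNgt; apply/negP => /pw_lt; lra. Qed.
Lemma pw_lt_inv (k n : nat) : pw n < pw k -> leq k.+1 n.
Proof. move=> h; rewrite ltnNge; apply/negP; rewrite leq_eqVlt => /orP [/eqP e|/pw_lt]; [rewrite e in h|]; lra. Qed.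

Lemma Vmono (m n : nat) : leq m n -> V n `<=` V m.
Proof.
move=> /subnK <-; elim: (subn n m) => [//|k IH] x /= hx.
apply: IH; have -> : x = (x * 1 * 1)%g by rewrite !mulg1.
by apply: Vcube.
Qed.

Definition Wk (g : G) (w : R) := exists n, V n g /\ w = pw n.

Lemma Wk_pos g w : Wk g w -> 0 < w.
Proof. by move=> [n [_ ->]]; apply: pw_pos. Qed.

Lemma split_list (l : seq (G * R)) t : 0 <= t -> t < lsum l ->
  exists l1 a l2, l = l1 ++ a :: l2 /\ lsum l1 <= t /\ t < lsum l1 + a.2.
Proof.
elim: l t => [|a l IH] t /= ht hl; first lra.
case: (Rlt_le_dec t a.2) => h.
  by exists [::], a, l; split => //=; split; lra.
have [l1 [b [l2 [-> [h1 h2]]]]] := IH (t - a.2) ltac:(lra) ltac:(lra).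
exists (a :: l1), b, l2; split => //=; split; lra.
Qed.

Lemma lsum_pos l : lok Wk l -> l <> [::] -> 0 < lsum l.
Proof.
case: l => [//|a l] /= [h1 h2] _.
have := Wk_pos h1; have := lsum_ge0 (fun g w h => Rlt_le _ _ (Wk_pos h)) h2; lra.
Qed.

Lemma kakutani m : forall l k, leq (size l) m -> lok Wk l -> lsum l <= pw k ->
  V k (lprod l).
Proof.
elim: m => [|m IH] l k.
  by case: l => // _ _ _; apply: Vone.
case: (altP (l =P [::])) => [-> _ _ _|ln hs hok hsum]; first exact: Vone.
have spos := lsum_pos hok (elimN eqP ln).
have [l1 [a [l2 [el [h1 h2]]]]] := split_list (l := l) (t := lsum l / 2) ltac:(lra) ltac:(lra).
have hs1 : leq (size l1) m.
  by move: hs; rewrite el size_cat /= addnS ltnS => /(leq_trans _); apply; apply: leq_addr.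
have hs2 : leq (size l2) m.
  by move: hs; rewrite el size_cat /= addnS ltnS => /(leq_trans _); apply; apply: leq_addl.
have esum : lsum l = lsum l1 + a.2 + lsum l2 by rewrite el lsum_cat /=; lra.
move: hok; rewrite el => hok.
have ok1 : lok Wk l1.
  by move: hok; elim: (l1) => [//|b l' IH'] /= [? /IH'].
have [oka ok2] : Wk a.1 a.2 /\ lok Wk l2.
  by move: hok; elim: (l1) => [//|b l' IH'] /= [? /IH'].
have V1 : V k.+1 (lprod l1) by apply: IH => //; rewrite pwS; lra.
have V2 : V k.+1 (lprod l2) by apply: IH => //; rewrite pwS; lra.
have g1 := lsum_ge0 (fun g w h => Rlt_le _ _ (Wk_pos h)) ok1.
have g2 := lsum_ge0 (fun g w h => Rlt_le _ _ (Wk_pos h)) ok2.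
case: oka => n [Vn an].
rewrite lprod_cat /= mulgA.
case: (Req_dec (lsum l1 + lsum l2) 0) => hz.
  have e1 : l1 = [::].
    case: (l1) ok1 hz g2 => // b l' ok1' hz' g2'.
    have := lsum_pos ok1' ltac:(done); lra.
  have e2 : l2 = [::].
    case: (l2) ok2 hz g1 => // b l' ok2' hz' g1'.
    have := lsum_pos ok2' ltac:(done); lra.
  rewrite e1 e2 /= mul1g mulg1.
  apply: (Vmono (m := k) (n := n)) => //; apply: pw_le_inv; lra.
have : V k.+1 a.1.
  apply: (Vmono (m := k.+1) (n := n)) => //; apply: pw_lt_inv; lra.
move=> Va; exact: Vcube.
Qed.

End Kak.

End M2.
Import M2.

Module M3.

Local Open Scope classical_set_scope.
Local Open Scope R_scope.
Local Open Scope group_scope.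


Lemma prodn (T U : topologicalType) (x : T) (y : U) (P : set (T * U)) :
  nbhs (x, y) P -> exists A B, nbhs x A /\ nbhs y B /\ (forall a b, A a -> B b -> P (a, b)).
Proof. case=> [[A B] /= [hA hB] hP]. exists A, B; split => //; split => // a b Ha Hb. by apply: hP. Qed.
Lemma prodn2 (T U : topologicalType) (x : T) (y : U) (A : set T) B :
 nbhs x A -> nbhs y B -> nbhs (x,y) (fun p => A p.1 /\ B p.2).
Proof. move=> hA hB. exists (A, B) => //. Qed.

Section Topo.
Variable G : topologicalGroupType.

Lemma mul_nbhs (x y : G) (O : set G) : nbhs (x * y) O ->
  exists A B, nbhs x A /\ nbhs y B /\ (forall a b, A a -> B b -> O (a * b)).
Proof.
move=> hO; have := @mulg_continuous G (x, y) O hO => /prodn [A [B [hA [hB h]]]].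
by exists A, B; split => //; split => // a b Ha Hb; apply: (h a b Ha Hb).
Qed.

Lemma inv_nbhs (x : G) (O : set G) : nbhs x^-1 O -> nbhs x (fun y => O y^-1).
Proof. move=> hO; exact: (@invg_continuous G x O hO). Qed.

Lemma root_ex (O : set G) : nbhs 1 O -> exists W : set G, nbhs 1 W /\
  (forall g, W g -> W g^-1) /\ (forall a b c, W a -> W b -> W c -> O (a * b * c)).
Proof.
move=> hO; have hO1 : nbhs ((1 : G) * 1) O by rewrite mulg1.
move: hO1 => {}hO.
have [A [B [hA [hB h1]]]] := mul_nbhs hO.
have hW1 : nbhs (1 * 1 : G) (A `&` B) by rewrite mulg1; apply: filterI.
have [C [D [hC [hD h2]]]] := mul_nbhs hW1.
have hW2 : nbhs (1 : G) (C `&` D) by apply: filterI.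
have hW2' : nbhs (1 : G) (fun y => (C `&` D) y^-1) by apply: inv_nbhs; rewrite invg1.
exists (fun y => (C `&` D) y /\ (C `&` D) y^-1); split; first exact: filterI.
split; first by move=> g [h h']; rewrite invgK.
move=> a b c [[Ca Da] _] [[Cb Db] _] [[Cc Dc] _].
have [Aab _] := h2 a b Ca Db.
have [_ Bc] : (A `&` B) c.
  rewrite -[c]mulg1; apply: h2 => //; apply: (nbhs_singleton hD).
exact: h1.
Qed.

Lemma ltrans_nbhs (x : G) (V : set G) : nbhs 1 V -> nbhs x (fun y => V (x^-1 * y)).
Proof.
move=> hV; rewrite -(mulVg x) in hV.
have [A [B [hA [hB h]]]] := mul_nbhs hV.
apply: filterS hB => y By; apply: h => //; exact: nbhs_singleton hA.
Qed.

Lemma dense_trans (D : set G) (U : set G) (x : G) : dense D -> nbhs 1 U ->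
  exists d, D d /\ U (d^-1 * x).
Proof.
move=> hD hU; rewrite -(mulVg x) in hU.
have [A [B [hA [hB h]]]] := mul_nbhs hU.
have := inv_nbhs hA; rewrite nbhsE => -[O [oO Ox] sO].
have [d [Od Dd]] := hD O (ex_intro _ x Ox) oO.
exists d; split => //; apply: h; first exact: sO.
exact: nbhs_singleton hB.
Qed.

Lemma cont_metric (d : G -> G -> R) :
  (forall x y, d x y = d y x) ->
  (forall x y z, (d x z <= d x y + d y z)) ->
  (forall g x y, d (g * x) (g * y) = d x y) ->
  (forall eps, (0 < eps) -> nbhs (1 : G) (fun z => (d 1 z < eps))) ->
  continuous_metric d.
Proof.
move=> dsym dtri dinv dnb [x y] A /= hA.
have [e /= e0 he] := (nbhs_ballP _ _).1 hA.
have {}e0 : 0 < e by apply/RltP.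
have e2 : (0 < Rdiv e 2) by lra.
have hx := ltrans_nbhs x (dnb _ e2).
have hy := ltrans_nbhs y (dnb _ e2).
apply: filterS (prodn2 hx hy) => -[x' y'] /= [h1 h2].
apply: he; apply/ballR.
have E1 : d x x' = d 1 (x^-1 * x') by rewrite -(dinv x 1) mulg1 mulgA mulgV mul1g.
have E2 : d y y' = d 1 (y^-1 * y') by rewrite -(dinv y 1) mulg1 mulgA mulgV mul1g.
have T1 := dtri x x' y; have T2 := dtri x' x y'; have T3 := dtri x' y' y; have T4 := dtri x y y'.
have S1 := dsym x' x; have S2 := dsym y' y.
move: h1 h2 => /= h1 h2. apply: Rabs_def1; lra.
Qed.

End Topo.

End M3.
Import M3.

Module M4.

Local Open Scope classical_set_scope.
Local Open Scope R_scope.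
Local Open Scope group_scope.


Lemma pw_small eps : 0 < eps -> exists n, pw n < eps.
Proof.
move=> he; have [N [h1 h2]] := archimed_cor1 eps he.
exists N; apply: Rle_lt_trans h1; rewrite /pw.
apply: Rinv_le_contravar; first exact: (lt_0_INR _ h2).
suff h : forall n, INR n <= pow 2 n by apply: h.
elim=> [|n IH]; first by simpl; lra.
rewrite S_INR /=; have : 1 <= pow 2 n by apply: pow_R1_Rle; lra.
lra.
Qed.

Lemma nat_big K : exists N, K < INR N.
Proof.
set K' := Rmax K 1.
have hK : 0 < K' by rewrite /K'; have := Rmax_r K 1; lra.
have [N [h1 h2]] := archimed_cor1 _ (Rinv_0_lt_compat _ hK).
exists N; have := Rmax_l K 1; rewrite -/K' => h.
apply: (Rle_lt_trans _ K'); first done.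
apply: Rnot_le_lt => hN.
have := Rinv_le_contravar (INR N) K' (lt_0_INR _ h2) hN; lra.
Qed.

Section Main.
Variable G : topologicalGroupType.

Lemma gen_sub (A : set G) : A `<=` generated A.
Proof. by move=> x Ax H _ /(_ x Ax). Qed.

Lemma gen_subgroup (A : set G) : is_subgroup (generated A).
Proof.
split; first by move=> H [h1 _] _.
split.
  move=> x y hx hy H hH sH; have [_ [hm _]] := hH.
  exact: hm (hx H hH sH) (hy H hH sH).
move=> x hx H hH sH; have [_ [_ hi]] := hH; exact: hi (hx H hH sH).
Qed.

Lemma gen_min (A H : set G) : is_subgroup H -> A `<=` H -> generated A `<=` H.
Proof. by move=> hH sH x /(_ H hH sH). Qed.

Lemma fd_of_norm (d : G -> G -> R) (B : set G) : is_metric d ->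
  (exists M, forall x, B x -> d 1 x <= M) -> finite_diameter d B.
Proof.
move=> [d0 [_ [ds dt]]] [M hM]; exists (M + M) => x y Bx By.
have := dt x 1 y; have := hM x Bx; have := hM y By; rewrite (ds x 1); lra.
Qed.

Lemma sb_union (U : set G) (e : nat -> G) (N : nat) : U 1 -> strongly_bounded U ->
  strongly_bounded (U `|` [set x | exists2 n, leq n.+1 N & x = e n]).
Proof.
move=> U1 sbU d md li; apply: fd_of_norm => //.
have [M1 hM1] := sbU d md li.
have [M2 hM2] : exists M2, forall n, leq n.+1 N -> d 1 (e n) <= M2.
  elim: (N) => [|k [M IH]]; first by exists 0.
  exists (Rmax M (d 1 (e k))) => n; rewrite ltnS leq_eqVlt => /orP [/eqP ->|/IH h].
    exact: Rmax_r.
  have := Rmax_l M (d 1 (e k)); lra.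
exists (Rmax M1 M2) => x [Ux|[n hn ->]].
  have := hM1 1 x U1 Ux; have := Rmax_l M1 M2; lra.
have := hM2 n hn; have := Rmax_r M1 M2; lra.
Qed.

End Main.

End M4.
Import M4.

Module M5.

Local Open Scope classical_set_scope.
Local Open Scope R_scope.
Local Open Scope group_scope.


Section Constr.
Variable G : topologicalGroupType.

Definition rt (O : set G) : set G :=
  match pselect (nbhs (1 : G) O) with
  | left h => proj1_sig (cid (root_ex h))
  | right _ => setT end.

Lemma rt_spec O : nbhs 1 O -> nbhs 1 (rt O) /\ (forall g, rt O g -> rt O g^-1) /\
  (forall a b c, rt O a -> rt O b -> rt O c -> O (a * b * c)).
Proof. rewrite /rt; case: pselect => // h _; case: cid => W /= hW; exact: hW. Qed.

Lemma rt_sub O : nbhs 1 O -> rt O `<=` O.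
Proof.
move=> hO x hx; have [h1 [_ h3]] := rt_spec hO.
rewrite -[x]mulg1 -[x * 1]mulg1; apply: h3 => //; exact: nbhs_singleton h1.
Qed.

Variable U : set G.
Variable d0 : G -> G -> R.
Hypothesis hU : nbhs 1 U.
Definition ball0 (r : R) : set G := fun y => d0 1 y < r.
Hypothesis hball : forall r, 0 < r -> nbhs 1 (ball0 r).

Lemma invS_pos n : 0 < / INR (S n).
Proof. apply: Rinv_0_lt_compat; apply: lt_0_INR; apply/ltP; done. Qed.

Fixpoint Vs n : set G := match n with
  | 0 => rt (U `&` ball0 1)
  | S m => rt (Vs m `&` ball0 (/ INR (S (S m)))) end.

Lemma Vs_nbhs n : nbhs 1 (Vs n).
Proof.
elim: n => [|n IH]; apply: (rt_spec _).1; apply: filterI => //; apply: hball.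
  lra.
exact: invS_pos.
Qed.

Lemma Vs_sub n : Vs n `<=` U /\ Vs n `<=` ball0 (/ INR (S n)).
Proof.
elim: n => [|n [IH1 IH2]].
  have h : nbhs (1 : G) (U `&` ball0 1) by apply: filterI => //; apply: hball; lra.
  split => x /(rt_sub h) [] //; rewrite /ball0 /=; lra.
have h : nbhs (1 : G) (Vs n `&` ball0 (/ INR (S (S n)))).
  apply: filterI; first exact: Vs_nbhs.
  apply: hball; exact: invS_pos.
by split => x /(rt_sub h) [] // /IH1.
Qed.

Lemma Vs_sym n g : Vs n g -> Vs n g^-1.
Proof.
case: n => [|n]; apply: (rt_spec _).2.1.
  by apply: filterI => //; apply: hball; lra.
apply: filterI; first exact: Vs_nbhs.
apply: hball; exact: invS_pos.
Qed.

Lemma Vs_cube n a b c : Vs n.+1 a -> Vs n.+1 b -> Vs n.+1 c -> Vs n (a * b * c).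
Proof.
move=> ha hb hc.
have h : nbhs (1 : G) (Vs n `&` ball0 (/ INR (S (S n)))).
  apply: filterI; first exact: Vs_nbhs.
  apply: hball; exact: invS_pos.
by have [] := (rt_spec h).2.2 a b c ha hb hc.
Qed.

Definition Vp n : set G := match n with 0 => setT | S m => Vs m end.

Lemma Vp_one n : Vp n 1.
Proof. case: n => [//|n] /=; exact: nbhs_singleton (Vs_nbhs n). Qed.

Lemma Vp_cube n a b c : Vp n.+1 a -> Vp n.+1 b -> Vp n.+1 c -> Vp n (a * b * c).
Proof. case: n => [//|n] /=; exact: Vs_cube. Qed.

Lemma Vp_sym n g : Vp n g -> Vp n g^-1.
Proof. case: n => [//|n] /=; exact: Vs_sym. Qed.

Definition W1 := Wk Vp.

Lemma W1pos g w : W1 g w -> 0 <= w.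
Proof. move=> h; apply: Rlt_le; exact: Wk_pos h. Qed.
Lemma W1inv g w : W1 g w -> W1 g^-1 w.
Proof. by move=> [n [h ->]]; exists n; split => //; apply: Vp_sym. Qed.
Lemma W1gen x : reps W1 x !=set0.
Proof.
exists (pw O), [:: (x, pw O)] => /=; rewrite mulg1; split; last (split => //; lra).
by split => //; exists O.
Qed.

Hypothesis d0_zero : forall x, (forall n, d0 1 x < / INR (S n)) -> x = 1.

Lemma len1_zero z : len W1 z = 0 -> z = 1.
Proof.
move=> h0; apply: d0_zero => n.
have [l [ok [pl sl]]] := len_ex W1gen z (pw_pos n.+1).
have := kakutani Vp_one Vp_cube (leqnn (size l)) ok (k := n.+1) ltac:(lra).
rewrite pl /= => /(Vs_sub n).2; done.
Qed.

End Constr.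

End M5.
Import M5.

Module M6.

Local Open Scope classical_set_scope.
Local Open Scope R_scope.
Local Open Scope group_scope.


Section Big.
Variable G : topologicalGroupType.
Variables (U D : set G) (f : G -> nat).
Hypothesis hU : nbhs 1 U.
Hypothesis hD : dense D.
Hypothesis finj : {in D &, injective f}.

Definition en n : G := xget 1 [set x | D x /\ f x = n].

Lemma en_f g : D g -> en (f g) = g.
Proof.
move=> Dg; have [Dx fx] : D (en (f g)) /\ f (en (f g)) = f g.
  have := xgetPex (1 : G) (P := [set x | D x /\ f x = f g]) (ex_intro _ g (conj Dg erefl)).
  by [].
by apply: finj => //; rewrite inE.
Qed.

Definition W2 (g : G) (w : R) :=
  ((U g \/ U g^-1) /\ w = 0) \/ exists n, (g = en n \/ g^-1 = en n) /\ w = INR n.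

Lemma W2pos g w : W2 g w -> 0 <= w.
Proof. case=> [[_ ->]|[n [_ ->]]]; [lra|exact: pos_INR]. Qed.

Lemma W2inv g w : W2 g w -> W2 g^-1 w.
Proof.
case=> [[h ->]|[n [h ->]]]; [left|right].
  by rewrite invgK; split => //; case: h; [right|left].
by exists n; rewrite invgK; split => //; case: h; [right|left].
Qed.

Lemma W2gen x : reps W2 x !=set0.
Proof.
have [d [Dd Ud]] := dense_trans x hD hU.
exists (INR (f d) + 0), [:: (d, INR (f d)); (d^-1 * x, 0)] => /=.
split; [|split].
- split; first by right; exists (f d); split => //; left; rewrite en_f.
  by split => //; left; split => //; left.
- by rewrite mulg1 mulgA mulgV mul1g.
- lra.
Qed.

End Big.

End M6.
Import M6.

Module M7.

Local Open Scope classical_set_scope.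
Local Open Scope R_scope.
Local Open Scope group_scope.


Theorem main_thm (G : topologicalGroupType) :
  polish G -> locally_strongly_bounded G -> CB_generated G -> SB_generated G.
Proof.
move=> [[D [cD dD]] [d0 [md0 [cd0 _]]]] [U [oU [U1 sbU]]] [A [cbA gA]].
have hU : nbhs (1 : G) U by apply: open_nbhs_nbhs.
have [d0pos [d0eq [d0sym d0tri]]] := md0.
have hball : forall r, 0 < r -> nbhs (1 : G) (ball0 d0 r).
  move=> r hr; apply: open_nbhs_nbhs; split.
    apply/cd0 => x hx; exists (r - d0 1 x); split; first by rewrite /ball0 in hx; lra.
    move=> y hy; rewrite /ball0; have := d0tri 1 x y; lra.
  by rewrite /ball0 (proj2 (d0eq 1 1) erefl).
have d0_zero : forall x, (forall n, d0 1 x < / INR (S n)) -> x = 1.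
  move=> x hx; apply/esym/(d0eq 1 x); apply: NNPP => hne.
  have hp : 0 < d0 1 x by have := d0pos 1 x; lra.
  have [N [h1 h2]] := archimed_cor1 _ hp.
  move: h1; case: N h2 => [/ltP //|n] _ h1; have := hx n; lra.
have [f finj] : exists f : G -> nat, {in D &, injective f} by apply/countable_injP.
pose W1' := W1 U d0.
pose W2' := W2 U D f.
have P1 : forall g w, W1' g w -> 0 <= w := @W1pos G U d0.
have I1 : forall g w, W1' g w -> W1' g^-1 w := @W1inv G U d0 hU hball.
have G1 := W1gen U d0.
have P2 : forall g w, W2' g w -> 0 <= w := @W2pos G U D f.
have I2 : forall g w, W2' g w -> W2' g^-1 w := @W2inv G U D f.
have G2 := W2gen hU dD finj.
pose Dm x y := ldist W1' x y + ldist W2' x y.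
have mDm : is_metric Dm.
  split; first by move=> x y; have := ldist_ge0 P1 G1 x y; have := ldist_ge0 P2 G2 x y; rewrite /Dm; lra.
  split.
    move=> x y; split; last by move=> ->; rewrite /Dm !ldist_xx //; lra.
    move=> h; have h1 : ldist W1' x y = 0.
      have := ldist_ge0 P1 G1 x y; have := ldist_ge0 P2 G2 x y; rewrite /Dm in h; lra.
    have := len1_zero hU hball d0_zero h1 => e1.
    by rewrite -[y]mul1g -(mulgV x) -mulgA e1 mulg1.
  split; first by move=> x y; rewrite /Dm (ldist_sym P1 I1 G1 x) (ldist_sym P2 I2 G2 x).
  move=> x y z; have := ldist_tri P1 G1 x y z; have := ldist_tri P2 G2 x y z; rewrite /Dm; lra.
have liDm : left_invariant Dm by move=> g x y; rewrite /Dm !ldist_linv.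
have cDm : continuous_metric Dm.
  apply: cont_metric.
  - by case: mDm => _ [_ [h _]].
  - by case: mDm => _ [_ [_ h]].
  - exact: liDm.
  move=> eps he; have [n hn] := pw_small he.
  apply: filterS (Vs_nbhs hU hball n) => z hz.
  have a1 : ldist W1' 1 z <= pw n.+1.
    rewrite /ldist invg1 mul1g; apply: (@len_letter G W1' P1 z (pw n.+1)); exists n.+1; split => //.
  have a2 : ldist W2' 1 z <= 0.
    rewrite /ldist invg1 mul1g; apply: (@len_letter G W2' P2 z 0); left; split => //; left.
    exact: (Vs_sub hU hball n).1.
  have := pw_lt (leqnn n.+1); rewrite /Dm; lra.
have [M hM] := cbA Dm mDm liDm cDm.
case: (pselect (A !=set0)) => [[a0 Aa0]|nA].
  have [N hN] := nat_big (Dm 1 a0 + M + 1).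
  exists (U `|` [set x | exists2 n, leq n.+1 N & x = en D f n]); split.
    exact: sb_union.
  rewrite /generates; set B := (X in generated X).
  have sub : forall l, lok W2' l -> lsum l < INR N -> generated B (lprod l).
    elim=> [|a l IH] /=; first by move=> _ _; exact: (gen_subgroup B).1.
    move=> [wa ok] hs.
    have ga := W2pos wa; have gl := lsum_ge0 P2 ok.
    apply: (gen_subgroup B).2.1; last by apply: IH => //; lra.
    case: wa => [[[Ua|Ua] _]|[n [[ea|ea] wn]]].
    - by apply: gen_sub; left.
    - by rewrite -[a.1]invgK; apply: (gen_subgroup B).2.2; apply: gen_sub; left.
    - apply: gen_sub; right; exists n => //; apply/ltP; apply: INR_lt; lra.
    - rewrite -[a.1]invgK; apply: (gen_subgroup B).2.2; apply: gen_sub; right.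
      exists n => //; apply/ltP; apply: INR_lt; lra.
  apply/seteqP; split => // x _.
  have : generated A x by rewrite gA.
  apply: gen_min; first exact: gen_subgroup.
  move=> a Aa.
  have hK : len W2' a <= Dm 1 a0 + M.
    have : ldist W2' 1 a <= Dm 1 a.
      have := ldist_ge0 P1 G1 1 a; rewrite /Dm; lra.
    rewrite /ldist invg1 mul1g => h.
    have := hM a0 a Aa0 Aa; case: mDm => _ [_ [_ tri]]; have := tri 1 a0 a; lra.
  have [l [ok [pl sl]]] := len_ex G2 a Rlt_0_1.
  rewrite -pl; apply: sub => //; move: hK sl hN; rewrite /W2' => hK sl hN; lra.
exists U; split => //.
apply/seteqP; split => // x _.
have : generated A x by rewrite gA.
apply: gen_min; first exact: gen_subgroup.
by move=> a Aa; exfalso; apply: nA; exists a.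
Qed.

End M7.
Import M7.

Theorem corollary2p13 (G : topologicalGroupType) :
  polish G -> locally_strongly_bounded G -> CB_generated G -> SB_generated G.
Proof. exact: M7.main_thm. Qed.
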